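(* Let $\mathcal{Q}=\mathcal{Q}_\ell(T,X,Y)\subseteq\mathcal{P}_\ell(T,X)$. For all $\alpha,\beta\in\mathcal{Q}$, $\alpha\,\sigma^{\mathcal{Q}}\,\beta$ if and only if $\alpha\,\sigma^{\mathcal{P}}\,\beta$, where $\sigma^{\mathcal{P}}$ is the least monoid congruence on $\mathcal{P}_\ell(T,X)$ containing $X\times X$ and $\sigma^{\mathcal{Q}}$ is the least monoid congruence on $\mathcal{Q}$ containing $Y\times Y$.
   Context: Let $T$ be a monoid, $X$ a semilattice with identity $1_X$ (ordered by $e\le f$ iff $ef=e$) with an order-preserving left action of $T$. $\mathcal{P}_\ell(T,X)$: let $T*X$ be the semigroup free product acting on $X$ (elements of $X$ act by multiplication), $\omega^+=\omega\cdot1_X$, $\sim$ the semigroup congruence generated by $\{(\alpha^+\alpha,\alpha)\}\cup\{(1_T,1_X)\}$, and $\mathcal{P}_\ell(T,X)=(T*X)/\sim$ with $[\alpha]^+=[\alpha^+]$; $X$, $T$ are identified with their injective images. It is known to be a left Ehresmann monoid with projections $X$ in which every $\sigma^{\mathcal{P}}$-class contains exactly one element of $T$. Let $Y$ be a subsemilattice of $X$ having an identity, satisfying (A): for all $t\in T$, $e,f\in Y$ with $e\le f$, $t\cdot f\in Y$ implies $t\cdot e\in Y$; (B): for all $t\in T$ there is $g\in Y$ with $t\cdot g\in Y$. $H^{\mathcal{Q}}=\{te:t\in T,e\in Y,t\cdot e\in Y\}$, and $\mathcal{Q}_\ell(T,X,Y)$ is the subsemigroup of $\mathcal{P}_\ell(T,X)$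 generated by $H^{\mathcal{Q}}$; it is a monoid with identity the identity of $Y$. *)

(* Defs.v *)
From Stdlib Require Import List.
Import ListNotations.
Set Implicit Arguments.

Record Ops := MkOps {
  tT : Type; tX : Type;
  mulT : tT -> tT -> tT; oneT : tT;
  meet : tX -> tX -> tX; oneX : tX;
  act : tT -> tX -> tX }.

Definition leX (O : Ops) (e f : tX O) : Prop := meet O e f = e.

Definition OpsAxioms (O : Ops) : Prop :=
  (forall a b c, mulT O a (mulT O b c) = mulT O (mulT O a b) c) /\
  (forall a, mulT O (oneT O) a = a) /\ (forall a, mulT O a (oneT O) = a) /\
  (forall e f g, meet O e (meet O f g) = meet O (meet O e f) g) /\
  (forall e f, meet O e f = meet O f e) /\
  (forall e, meet O e e = e) /\
  (forall e, meet O (oneX O) e = e) /\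
  (forall x, act O (oneT O) x = x) /\
  (forall s t x, act O (mulT O s t) x = act O s (act O t x)) /\
  (forall t e f, leX O e f -> leX O (act O t e) (act O t f)).

(** Words over T ⊔ X represent elements of the free semigroup product T*X. *)
Definition word (O : Ops) := list (tT O + tX O).

Definition actw (O : Ops) (w : word O) (x : tX O) : tX O :=
  fold_right (fun l y => match l with inl t => act O t y | inr e => meet O e y end) x w.

Definition plusw (O : Ops) (w : word O) : tX O := actw w (oneX O).

(** The congruence on words whose quotient is P_l(T,X): the free-product relations
    (adjacent letters of one factor are multiplied) together with
    (alpha^+ alpha, alpha) and (1_T, 1_X), closed under the semigroup congruence rules. *)
Inductive simP (O : Ops) : word O -> word O -> Prop :=
| simP_refl w : simP w w
| simP_sym u v : simP u v -> simP v u
| simP_trans u v w : simP u v -> simP v w -> simP u w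
| simP_ctx a b u v : simP u v -> simP (a ++ u ++ b) (a ++ v ++ b)
| simP_mulT s t : simP [inl s; inl t] [inl (mulT O s t)]
| simP_mulX e f : simP [inr e; inr f] [inr (meet O e f)]
| simP_plus w : w <> [] -> simP (inr (plusw w) :: w) w
| simP_one : simP [inl (oneT O)] [inr (oneX O)].

Inductive sigmaP (O : Ops) : word O -> word O -> Prop :=
| sigmaP_sim u v : simP u v -> sigmaP u v
| sigmaP_sym u v : sigmaP u v -> sigmaP v u
| sigmaP_trans u v w : sigmaP u v -> sigmaP v w -> sigmaP u w
| sigmaP_ctx a b u v : sigmaP u v -> sigmaP (a ++ u ++ b) (a ++ v ++ b)
| sigmaP_X e f : sigmaP [inr e] [inr f].

Definition inH (O : Ops) (Y : tX O -> Prop) (w : word O) : Prop :=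
  exists t e, Y e /\ Y (act O t e) /\ w = [inl t; inr e].

(** Membership of (the class of) a word in Q_l(T,X,Y): it is ~-equivalent to a
    nonempty product of elements of H^Q. *)
Definition inQ (O : Ops) (Y : tX O -> Prop) (w : word O) : Prop :=
  exists gs : list (word O), gs <> [] /\ Forall (inH Y) gs /\ simP w (concat gs).

Inductive sigmaQ (O : Ops) (Y : tX O -> Prop) : word O -> word O -> Prop :=
| sigmaQ_sim u v : inQ Y u -> simP u v -> sigmaQ Y u v
| sigmaQ_sym u v : sigmaQ Y u v -> sigmaQ Y v u
| sigmaQ_trans u v w : sigmaQ Y u v -> sigmaQ Y v w -> sigmaQ Y u w
| sigmaQ_mull a u v : inQ Y a -> sigmaQ Y u v -> sigmaQ Y (a ++ u) (a ++ v)
| sigmaQ_mulr a u v : inQ Y a -> sigmaQ Y u v -> sigmaQ Y (u ++ a) (v ++ a)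
| sigmaQ_Y e f : Y e -> Y f -> sigmaQ Y [inr e] [inr f].

(** Hypotheses on Y: subsemilattice with an identity, conditions (A) and (B). *)
Definition YAxioms (O : Ops) (Y : tX O -> Prop) : Prop :=
  (forall e f, Y e -> Y f -> Y (meet O e f)) /\
  (exists iY, Y iY /\ forall f, Y f -> meet O iY f = f) /\
  (forall t e f, Y e -> Y f -> leX O e f -> Y (act O t f) -> Y (act O t e)) /\
  (forall t, exists g, Y g /\ Y (act O t g)).

(* Main.v *)
Require Import Defs.
From Stdlib Require Import List.
Import ListNotations.

Section S.
Variable O : Ops.

Fixpoint phi (w : word O) : tT O :=
  match w with
  | [] => oneT O
  | inl t :: w' => mulT O t (phi w')
  | inr _ :: w' => phi w'
  end.

Lemma simP_ctx' (a b u v x y : word O) :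
  x = a ++ u ++ b -> y = a ++ v ++ b -> simP u v -> simP x y.
Proof. intros -> -> H; apply simP_ctx; exact H. Qed.

Hypothesis HO : OpsAxioms O.

Lemma phi_app a b : phi (a ++ b) = mulT O (phi a) (phi b).
Proof.
  destruct HO as (mA & m1l & m1r & _).
  induction a as [|[t|e] a IH]; simpl.
  - now rewrite m1l.
  - now rewrite IH, mA.
  - exact IH.
Qed.

Lemma phi_simP u v : simP u v -> phi u = phi v.
Proof.
  pose proof HO as (mA & m1l & m1r & _).
  induction 1; simpl; auto; try congruence;
  try (now rewrite !phi_app, IHsimP); try (now rewrite !m1r).
Qed.

Lemma phi_sigmaP u v : sigmaP u v -> phi u = phi v.
Proof.
  induction 1; auto using phi_simP.
  - congruence.
  - now rewrite !phi_app, IHsigmaP.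
Qed.

Lemma L1 s f : simP [inl s; inr f] [inr (act O s f); inl s; inr f].
Proof.
  pose proof HO as (mA & m1l & m1r & xA & xC & xI & x1 & _).
  apply simP_sym.
  assert (E : plusw [inl s; inr f] = act O s f).
  { unfold plusw, actw; simpl. now rewrite xC, x1. }
  rewrite <- E. apply simP_plus. discriminate.
Qed.

Variable Y : tX O -> Prop.
Hypothesis HY : YAxioms O Y.

Lemma inQ_H w : inH Y w -> inQ Y w.
Proof.
  intro H. exists [w]. split; [discriminate|]. split; [constructor; auto|].
  simpl. rewrite app_nil_r. apply simP_refl.
Qed.

Lemma inQ_sim u v : inQ Y u -> simP u v -> inQ Y v.
Proof.
  intros (gs & H1 & H2 & H3) H. exists gs. repeat split; auto.
  eapply simP_trans; [apply simP_sym; exact H|exact H3].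
Qed.

Lemma sigQ_sim u v : inQ Y v -> simP u v -> sigmaQ Y u v.
Proof. intros H1 H2. apply sigmaQ_sym, sigmaQ_sim; auto using simP_sym. Qed.

Lemma gen_class1 t e g : Y e -> Y (act O t e) -> Y g ->
  sigmaQ Y [inl t; inr e] [inl t; inr (meet O e g)].
Proof.
  pose proof HO as (mA & m1l & m1r & xA & xC & xI & x1 & _).
  pose proof HY as (Ymeet & _ & YA & YB).
  intros He Hte Hg.
  assert (Hle : leX O (meet O e g) e).
  { unfold leX. rewrite (xC (meet O e g) e), xA, xI. reflexivity. }
  assert (Hteg : Y (act O t (meet O e g))) by (apply (YA t (meet O e g) e); auto).
  assert (G1 : inQ Y [inl t; inr e]) by (apply inQ_H; exists t, e; auto).
  assert (G2 : inQ Y [inl t; inr (meet O e g)])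
    by (apply inQ_H; exists t, (meet O e g); auto).
  eapply sigmaQ_trans.
  { apply sigmaQ_sim with (v := [inl t; inr e] ++ [inr e]); [exact G1|].
    apply simP_ctx' with (a := [inl t]) (b := []) (u := [inr e]) (v := [inr e; inr e]);
      try reflexivity.
    apply simP_sym. rewrite <- (xI e) at 3. apply simP_mulX. }
  apply sigmaQ_trans with (v := [inl t; inr e] ++ [inr (meet O e g)]).
  { apply sigmaQ_mull; [exact G1|]. apply sigmaQ_Y; auto. }
  apply sigQ_sim; [exact G2|].
  apply simP_ctx' with (a := [inl t]) (b := []) (u := [inr e; inr (meet O e g)])
    (v := [inr (meet O e g)]); try reflexivity.
  replace (meet O e g) with (meet O e (meet O e g)) at 2.
  - apply simP_mulX.
  - now rewrite xA, xI.
Qed.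

Lemma gen_class t e g : Y e -> Y (act O t e) -> Y g -> Y (act O t g) ->
  sigmaQ Y [inl t; inr e] [inl t; inr g].
Proof.
  pose proof HO as (mA & m1l & m1r & xA & xC & xI & x1 & _).
  intros. eapply sigmaQ_trans; [apply gen_class1 with (g := g); auto|].
  rewrite xC. apply sigmaQ_sym, gen_class1; auto.
Qed.

Lemma step t e s f : Y e -> Y (act O t e) -> Y f -> Y (act O s f) ->
  exists h, Y h /\ Y (act O (mulT O t s) h) /\
  sigmaQ Y ([inl t; inr e] ++ [inl s; inr f]) [inl (mulT O t s); inr h].
Proof.
  pose proof HO as (mA & m1l & m1r & xA & xC & xI & x1 & a1 & aM & aO).
  pose proof HY as (Ymeet & _ & YA & YB).
  intros He Hte Hf Hsf.
  destruct (YB (mulT O t s)) as (g & Hg & Htsg).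
  set (f' := meet O f g).
  assert (Hf' : Y f') by (apply Ymeet; auto).
  assert (L1' : leX O f' f) by (unfold leX, f'; rewrite (xC (meet O f g) f), xA, xI; reflexivity).
  assert (L2' : leX O f' g) by (unfold leX, f'; rewrite <- xA, xI; reflexivity).
  assert (Hsf' : Y (act O s f')) by (apply (YA s f' f); auto).
  assert (Htsf' : Y (act O (mulT O t s) f')) by (apply (YA _ f' g); auto).
  set (y := act O s f').
  assert (Hty : Y (act O t y)) by (unfold y; rewrite <- aM; auto).
  exists f'. split; [auto|]. split; [auto|].
  assert (G1 : inQ Y [inl t; inr e]) by (apply inQ_H; exists t, e; auto).
  assert (G2 : inQ Y [inl s; inr f']) by (apply inQ_H; exists s, f'; auto).
  assert (G3 : inQ Y [inl (mulT O t s); inr f'])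
    by (apply inQ_H; exists (mulT O t s), f'; auto).
  apply sigmaQ_trans with (v := [inl t; inr e] ++ [inl s; inr f']).
  { apply sigmaQ_mull; [exact G1|]. apply gen_class; auto. }
  apply sigmaQ_trans with (v := [inl t; inr y] ++ [inl s; inr f']).
  { apply sigmaQ_mulr; [exact G2|]. apply (gen_class t e y); auto. }
  apply sigQ_sim; [exact G3|].
  apply simP_trans with (v := [inl t; inl s; inr f']).
  - apply simP_ctx' with (a := [inl t]) (b := []) (u := [inr y; inl s; inr f'])
      (v := [inl s; inr f']); try reflexivity.
    apply simP_sym, L1.
  - apply simP_ctx' with (a := []) (b := [inr f']) (u := [inl t; inl s])
      (v := [inl (mulT O t s)]); try reflexivity.
    apply simP_mulT.
Qed.

Lemma reduce gs : gs <> [] -> Forall (inH Y) gs ->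
  exists s h, Y h /\ Y (act O s h) /\ phi (concat gs) = s /\
    sigmaQ Y (concat gs) [inl s; inr h].
Proof.
  pose proof HO as (mA & m1l & m1r & _).
  induction gs as [|g gs IH]; intros Hne HF; [congruence|].
  inversion HF as [|? ? Hg HF']; subst.
  destruct Hg as (t & e & He & Hte & ->).
  destruct gs as [|g2 gs'].
  - exists t, e. simpl. repeat split; auto.
    + apply sigmaQ_sim; [apply inQ_H; exists t, e; auto| apply simP_refl].
  - destruct IH as (s & f & Hf & Hsf & Hphi & Hsig); [discriminate|exact HF'|].
    destruct (step t e s f) as (h & Hh & Hh2 & Hs); auto.
    exists (mulT O t s), h. repeat split; auto.
    + change (concat ([inl t; inr e] :: g2 :: gs')) with
        ([inl t; inr e] ++ concat (g2 :: gs')).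
      rewrite phi_app, Hphi. simpl. now rewrite m1r.
    + eapply sigmaQ_trans; [|exact Hs].
      change (concat ([inl t; inr e] :: g2 :: gs')) with
        ([inl t; inr e] ++ concat (g2 :: gs')).
      apply sigmaQ_mull; [apply inQ_H; exists t, e; auto|exact Hsig].
Qed.

Lemma canon a : inQ Y a -> exists s h, Y h /\ Y (act O s h) /\ phi a = s /\
    sigmaQ Y a [inl s; inr h].
Proof.
  intros Ha. pose proof Ha as (gs & H1 & H2 & H3).
  destruct (reduce gs H1 H2) as (s & h & A & B & C & D).
  exists s, h. repeat split; auto.
  - rewrite (phi_simP _ _ H3); auto.
  - eapply sigmaQ_trans; [apply sigmaQ_sim; [exact Ha|exact H3]|exact D].
Qed.

End S.

Theorem mainTheorem17 (O : Ops) (Y : tX O -> Prop)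
  (HO : OpsAxioms O) (HY : YAxioms O Y) :
  forall alpha beta : word O, inQ Y alpha -> inQ Y beta ->
    (sigmaQ Y alpha beta <-> sigmaP alpha beta).
Proof.
  intros a b Ha Hb. split.
  - clear Ha Hb. induction 1.
    + now apply sigmaP_sim.
    + now apply sigmaP_sym.
    + eapply sigmaP_trans; eauto.
    + pose proof (sigmaP_ctx a [] IHsigmaQ) as K. now rewrite !app_nil_r in K.
    + exact (sigmaP_ctx [] a IHsigmaQ).
    + apply sigmaP_X.
  - intro H. pose proof (phi_sigmaP _ HO _ _ H) as E.
    destruct (canon _ HO _ HY _ Ha) as (s & h & A1 & A2 & A3 & A4).
    destruct (canon _ HO _ HY _ Hb) as (s' & h' & B1 & B2 & B3 & B4).
    assert (Hss : s' = s) by congruence. rewrite Hss in B2, B4.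
    apply sigmaQ_trans with (v := [inl s; inr h]); [exact A4|].
    apply sigmaQ_trans with (v := [inl s; inr h']).
    + apply (gen_class _ HO _ HY); auto.
    + apply sigmaQ_sym; exact B4.
Qed.
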